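(* For every real $c>0$ and all integers $n,k\ge0$, $$|\beta_k^n|=\Big|\int_{-1}^1\overline P_k(x)\,\psi_{n,c}(x)\,dx\Big|\le\Big(\frac c2\Big)^k\frac{\sqrt\pi}{\Gamma(k+3/2)}\,\frac{1}{|\mu_n(c)|}.$$
   Context: $\overline P_k=\sqrt{k+1/2}\,P_k$ is the $L^2([-1,1])$-normalized Legendre polynomial. The prolate spheroidal wave functions $\psi_{n,c}$ (normalized by $\int_{-1}^1|\psi_{n,c}|^2=1$) are the eigenfunctions of the finite Fourier transform $Q_cf(x)=\int_{-1}^1e^{icxy}f(y)\,dy$ on $L^2([-1,1])$: $Q_c\psi_{n,c}=\mu_n(c)\psi_{n,c}$, with $\mu_n(c)\ne0$. $\Gamma$ is the Gamma function. *)

(* Defs.v *)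
From Stdlib Require Import Reals Arith Factorial.
Open Scope R_scope.

(* Legendre polynomials via Bonnet's recurrence:
   P_0 = 1, P_1 = x, (m+2) P_{m+2} = (2m+3) x P_{m+1} - (m+1) P_m.
   legendre_pair m x = (P_m x, P_{m+1} x). *)
Fixpoint legendre_pair (m : nat) (x : R) : R * R :=
  match m with
  | O => (1, x)
  | S m' =>
      let (p, q) := legendre_pair m' x in
      (q, ((2 * INR m' + 3) * x * q - (INR m' + 1) * p) / (INR m' + 2))
  end.

Definition legendre (k : nat) (x : R) : R := fst (legendre_pair k x).

(* L^2([-1,1])-normalized Legendre polynomial  Pbar_k = sqrt(k+1/2) P_k *)
Definition Pbar (k : nat) (x : R) : R := sqrt (INR k + / 2) * legendre k x.

Fixpoint rising_prod (s : R) (n : nat) : R :=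
  match n with
  | O => s
  | S m => rising_prod s m * (s + INR (S m))
  end.

(* Gauss's product formula: Gamma(s) = lim_n n! n^s / (s (s+1) ... (s+n)),
   valid for s > 0 (indeed for s not a non-positive integer). *)
Definition gauss_seq (s : R) (n : nat) : R :=
  INR (fact n) * Rpower (INR n) s / rising_prod s n.

Definition is_Gamma (s g : R) : Prop := Un_cv (gauss_seq s) g.

(* psi is a real-valued, continuous, L^2([-1,1])-normalized eigenfunction of
   the finite Fourier transform Q_c f(x) = int_{-1}^1 e^{icxy} f(y) dy with
   complex eigenvalue mu = mr + i mi.  Since psi is real, Q_c psi = mu psi is
   equivalent to the two real equations on the cosine and sine parts. *)
Definition prolate_eigen (c : R) (psi : R -> R) (mr mi : R) : Prop :=
  (forall x, -1 <= x <= 1 -> continuity_pt psi x) /\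
  (exists pr : Riemann_integrable (fun y => psi y ^ 2) (-1) 1, RiemannInt pr = 1) /\
  (forall x, -1 <= x <= 1 ->
     exists prc : Riemann_integrable (fun y => cos (c * x * y) * psi y) (-1) 1,
       RiemannInt prc = mr * psi x) /\
  (forall x, -1 <= x <= 1 ->
     exists prs : Riemann_integrable (fun y => sin (c * x * y) * psi y) (-1) 1,
       RiemannInt prs = mi * psi x).

(* Main.v *)
Require Import Defs.
From Stdlib Require Import Reals.
From Stdlib Require Import Lra Lia Psatz ClassicalEpsilon FunctionalExtensionality Arith Factorial.
Open Scope R_scope.


Definition Int (a b : R) (f : R -> R) : R :=
  epsilon (inhabits 0) (fun v => exists pr : Riemann_integrable f a b, RiemannInt pr = v).

Lemma Int_eq a b f (pr : Riemann_integrable f a b) : Int a b f = RiemannInt pr.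
Proof.
  unfold Int.
  destruct (epsilon_spec (inhabits 0) (fun v => exists pr : Riemann_integrable f a b, RiemannInt pr = v)) as [pr' H].
  - exists (RiemannInt pr). exists pr. reflexivity.
  - rewrite <- H. apply RiemannInt_P5.
Qed.

Definition Cf (a b : R) (f : R -> R) := forall x, a <= x <= b -> continuity_pt f x.

Lemma Cf_RI a b f : a <= b -> Cf a b f -> Riemann_integrable f a b.
Proof. intros; apply continuity_implies_RiemannInt; auto. Qed.

Lemma Cf_plus a b f g : Cf a b f -> Cf a b g -> Cf a b (fun x => f x + g x).
Proof. intros Hf Hg x Hx. apply (continuity_pt_plus f g); auto. Qed.
Lemma Cf_mult a b f g : Cf a b f -> Cf a b g -> Cf a b (fun x => f x * g x).
Proof. intros Hf Hg x Hx. apply (continuity_pt_mult f g); auto. Qed.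
Lemma Cf_const a b l : Cf a b (fun _ => l).
Proof. intros x _. apply (continuity_pt_const (fun _ => l)). intros u v; auto. Qed.
Lemma Cf_cont a b f : continuity f -> Cf a b f.
Proof. intros H x _; apply H. Qed.
Lemma Cf_id a b : Cf a b (fun x => x).
Proof. apply Cf_cont. apply derivable_continuous, derivable_id. Qed.
Lemma Cf_scal a b l f : Cf a b f -> Cf a b (fun x => l * f x).
Proof. intros; apply Cf_mult; auto using Cf_const. Qed.
Lemma Cf_opp a b f : Cf a b f -> Cf a b (fun x => - f x).
Proof. intros Hf x Hx. apply (continuity_pt_opp f); auto. Qed.
Lemma Cf_minus a b f g : Cf a b f -> Cf a b g -> Cf a b (fun x => f x - g x).
Proof. intros Hf Hg x Hx. apply (continuity_pt_minus f g); auto. Qed.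
Lemma Cf_abs a b f : Cf a b f -> Cf a b (fun x => Rabs (f x)).
Proof. intros Hf x Hx. apply (continuity_pt_comp f Rabs); auto. apply Rcontinuity_abs. Qed.
Lemma Cf_pow a b f n : Cf a b f -> Cf a b (fun x => f x ^ n).
Proof. intros Hf. induction n; simpl. apply Cf_const. apply Cf_mult; auto. Qed.
Lemma Cf_sum a b (f : nat -> R -> R) N : (forall j, Cf a b (f j)) ->
  Cf a b (fun x => sum_f_R0 (fun j => f j x) N).
Proof. intros H; induction N; simpl; auto. apply Cf_plus; auto. Qed.
Lemma Cf_ext a b f g : (forall x, f x = g x) -> Cf a b f -> Cf a b g.
Proof. intros H; replace g with f; auto. apply functional_extensionality; auto. Qed.


Lemma Int_lin (a b : R) (hab : a <= b) f g l : Cf a b f -> Cf a b g ->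
  Int a b (fun x => f x + l * g x) = Int a b f + l * Int a b g.
Proof.
  intros Hf Hg. pose proof (Cf_RI _ _ _ hab Hf) as pf. pose proof (Cf_RI _ _ _ hab Hg) as pg.
  rewrite (Int_eq _ _ _ (RiemannInt_P10 l pf pg)), (Int_eq _ _ _ pf), (Int_eq _ _ _ pg).
  apply RiemannInt_P13.
Qed.

Lemma Int_ext (a b : R) (hab : a <= b) f g : Cf a b f -> (forall x, a <= x <= b -> f x = g x) -> Int a b f = Int a b g.
Proof.
  intros Hf H. pose proof (Cf_RI _ _ _ hab Hf) as pf.
  assert (pg : Riemann_integrable g a b).
  { apply (@Riemann_integrable_ext f g a b); auto. intros x Hx; apply H.
    rewrite Rmin_left, Rmax_right in Hx; auto. }
  rewrite (Int_eq _ _ _ pf), (Int_eq _ _ _ pg).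
  apply RiemannInt_P18; auto. intros; apply H; lra.
Qed.

Lemma Int_plus (a b : R) (hab : a <= b) f g : Cf a b f -> Cf a b g ->
  Int a b (fun x => f x + g x) = Int a b f + Int a b g.
Proof.
  intros Hf Hg. rewrite <- (Rmult_1_l (Int a b g)), <- (Int_lin a b hab); auto.
  apply (Int_ext a b hab). apply Cf_plus; auto. intros; ring.
Qed.

Lemma Int_const (a b : R) l : Int a b (fun _ => l) = l * (b - a).
Proof.
  change (fun _ : R => l) with (fct_cte l).
  rewrite (Int_eq _ _ _ (RiemannInt_P14 a b l)). apply RiemannInt_P15.
Qed.

Lemma Int_scal (a b : R) (hab : a <= b) l f : Cf a b f -> Int a b (fun x => l * f x) = l * Int a b f.
Proof.
  intros Hf. rewrite <- (Rplus_0_l (l * Int a b f)).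
  replace 0 with (Int a b (fun _ => 0)) by (rewrite Int_const; ring).
  rewrite <- (Int_lin a b hab); auto using Cf_const. apply (Int_ext a b hab). apply Cf_scal; auto. intros; ring.
Qed.

Lemma Int_minus (a b : R) (hab : a <= b) f g : Cf a b f -> Cf a b g ->
  Int a b (fun x => f x - g x) = Int a b f - Int a b g.
Proof.
  intros Hf Hg. unfold Rminus.
  replace (- Int a b g) with ((-1) * Int a b g) by ring. rewrite <- (Int_lin a b hab); auto.
  apply (Int_ext a b hab). apply Cf_minus; auto. intros; ring.
Qed.

Lemma Int_mono (a b : R) (hab : a <= b) f g : Cf a b f -> Cf a b g -> (forall x, a <= x <= b -> f x <= g x) ->
  Int a b f <= Int a b g.
Proof.
  intros Hf Hg H. pose proof (Cf_RI _ _ _ hab Hf) as pf. pose proof (Cf_RI _ _ _ hab Hg) as pg.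
  rewrite (Int_eq _ _ _ pf), (Int_eq _ _ _ pg). apply RiemannInt_P19; auto.
  intros; apply H; lra.
Qed.

Lemma Int_abs (a b : R) (hab : a <= b) f : Cf a b f -> Rabs (Int a b f) <= Int a b (fun x => Rabs (f x)).
Proof.
  intros Hf. pose proof (Cf_RI _ _ _ hab Hf) as pf.
  rewrite (Int_eq _ _ _ pf), (Int_eq _ _ _ (RiemannInt_P16 pf)). apply RiemannInt_P17; auto.
Qed.

Lemma Int_nonneg (a b : R) (hab : a <= b) f : Cf a b f -> (forall x, a <= x <= b -> 0 <= f x) -> 0 <= Int a b f.
Proof.
  intros Hf H. replace 0 with (Int a b (fun _ => 0)) by (rewrite Int_const; ring).
  apply (Int_mono a b hab); auto using Cf_const.
Qed.

Lemma Int_sum (a b : R) (hab : a <= b) (f : nat -> R -> R) N : (forall j, Cf a b (f j)) ->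
  Int a b (fun x => sum_f_R0 (fun j => f j x) N) = sum_f_R0 (fun j => Int a b (f j)) N.
Proof.
  intros H. induction N; simpl.
  - apply (Int_ext a b hab); auto.
  - rewrite (Int_plus a b hab); auto. rewrite IHN; auto. apply Cf_sum; auto.
Qed.

Lemma Int_FTC (a b : R) (hab : a <= b) f F : Cf a b f -> (forall x, a <= x <= b -> derivable_pt_lim F x (f x)) ->
  Int a b f = F b - F a.
Proof.
  intros Hf HF. rewrite (Int_eq _ _ _ (Cf_RI _ _ _ hab Hf)).
  rewrite (RiemannInt_P20 hab (FTC_P1 hab Hf)).
  set (P := primitive hab (FTC_P1 hab Hf)).
  assert (HP : forall x, a <= x <= b -> derivable_pt_lim P x (f x)).
  { intros; apply RiemannInt_P28; auto. }
  destruct (Req_dec a b) as [<-|Hne]. ring.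
  destruct (MVT_cor2 (fun x => P x - F x) (fun x => f x - f x) a b) as [c [Hc _]].
  lra. intros; apply derivable_pt_lim_minus; auto.
  replace (f c - f c) with 0 in Hc by ring. lra.
Qed.



Notation I1 := (Int (-1) 1).
Notation C1 := (Cf (-1) 1).
Lemma m1le1 : -1 <= 1. Proof. lra. Qed.

Definition w (k i : nat) : R := I1 (fun y => (1 - y^2)^k * y^i).

Lemma Cf_poly_w k i : C1 (fun y => (1 - y^2)^k * y^i).
Proof. apply Cf_mult; apply Cf_pow; [apply Cf_minus; [apply Cf_const| apply Cf_pow, Cf_id]| apply Cf_id]. Qed.

Lemma w00 : w 0 0 = 2.
Proof. unfold w. rewrite (Int_ext _ _ m1le1 _ (fun _ => 1)). rewrite Int_const; lra.
  apply Cf_poly_w. intros; simpl; ring. Qed.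

Lemma dpow x n : derivable_pt_lim (fun y => y ^ n) x (INR n * x ^ pred n).
Proof. apply derivable_pt_lim_pow. Qed.

Lemma w01 : w 0 1 = 0.
Proof. unfold w.
  rewrite (Int_FTC _ _ m1le1 _ (fun y => y^2 / 2)). simpl; field.
  apply Cf_poly_w.
  intros x _. 
  replace ((1 - x^2)^0 * x^1) with (INR 2 * x ^ pred 2 * / 2) by (simpl; field).
  apply derivable_pt_lim_scal_right. apply dpow.
Qed.

Lemma W1 k i : w (S k) i = w k i - w k (i+2).
Proof. unfold w. rewrite <- Int_minus; auto using m1le1, Cf_poly_w.
  apply Int_ext; auto using m1le1, Cf_poly_w. intros; rewrite pow_add; simpl; ring. Qed.

Lemma W2 k i : INR (i+1) * w (S k) i = 2 * INR (k+1) * w k (i+2).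
Proof.
  apply Rminus_diag_uniq.
  unfold w. rewrite <- !Int_scal; auto using m1le1, Cf_poly_w.
  rewrite <- Int_minus; auto using m1le1, Cf_scal, Cf_poly_w.
  rewrite (Int_FTC _ _ m1le1 _ (fun y => (1 - y^2)^(S k) * y^(i+1))).
  - rewrite !pow_add. simpl. ring.
  - apply Cf_minus; apply Cf_scal; apply Cf_poly_w.
  - intros x _.
    set (l1 := INR (S k) * (1 - x^2)^k * (- (INR 2 * x))).
    set (l2 := INR (i+1) * x ^ i).
    replace (INR (i + 1) * ((1 - x ^ 2) ^ S k * x ^ i) -
             2 * INR (k + 1) * ((1 - x ^ 2) ^ k * x ^ (i + 2)))
      with (l1 * x ^ (i+1) + (1 - x^2)^(S k) * l2).
    2:{ unfold l1, l2. rewrite !plus_INR, !S_INR, !pow_add. simpl. ring. }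
    apply (derivable_pt_lim_mult (fun y => (1 - y^2)^(S k)) (fun y => y^(i+1))).
    + unfold l1.
      apply (derivable_pt_lim_comp (fun y => 1 - y^2) (fun z => z^(S k))).
      * replace (- (INR 2 * x)) with (0 - INR 2 * x ^ pred 2) by (simpl; ring).
        apply (derivable_pt_lim_minus (fun _ => 1) (fun y => y^2)).
        apply derivable_pt_lim_const. apply dpow.
      * replace (INR (S k) * (1 - x^2)^k) with (INR (S k) * (1 - x^2)^ pred (S k)) by reflexivity.
        apply dpow.
    + unfold l2. replace i with (pred (i+1)) at 2 by lia. apply dpow.
Qed.

Lemma W3 k i : INR (2*k+i+3) * w (S k) i = 2 * INR (k+1) * w k i.
Proof.
  pose proof (W1 k i). pose proof (W2 k i).
  rewrite !plus_INR, mult_INR in *. simpl in *. nra.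
Qed.

Lemma W4 k i : INR (2*k+i+3) * w k (i+2) = INR (i+1) * w k i.
Proof.
  pose proof (W2 k i). pose proof (W3 k i).
  assert (Hk : 0 < INR (k+1)) by (apply lt_0_INR; lia).
  apply (Rmult_eq_reg_l (2 * INR (k+1))); [|lra].
  set (A := INR (2*k+i+3)) in *. set (B := INR (i+1)) in *.
  transitivity (A * (B * w (S k) i)). rewrite H; ring.
  transitivity (B * (A * w (S k) i)). ring. rewrite H0; ring.
Qed.

Lemma w_1 k : w k 1 = 0.
Proof. induction k. apply w01. pose proof (W3 k 1). rewrite IHk in H.
  assert (0 < INR (2*k+1+3)) by (apply lt_0_INR; lia). nra. Qed.

Lemma w_k0_pos k : 0 < w k 0.
Proof. induction k. rewrite w00; lra. pose proof (W3 k 0).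
  assert (0 < INR (2*k+0+3)) by (apply lt_0_INR; lia).
  assert (0 < INR (k+1)) by (apply lt_0_INR; lia). nra. Qed.

Lemma w0_even k : w 0 (2*k) = 2 / INR (2*k+1).
Proof. induction k. simpl. rewrite w00. field.
  pose proof (W4 0 (2*k)). replace (2 * S k)%nat with (2*k+2)%nat by lia.
  replace (2*0+2*k+3)%nat with (2*k+2+1)%nat in H by lia.
  assert (0 < INR (2*k+2+1)) by (apply lt_0_INR; lia).
  apply (Rmult_eq_reg_l (INR (2*k+2+1))); [|lra]. rewrite H, IHk.
  field. split; apply not_0_INR; lia.
Qed.


Lemma leg0 x : legendre 0 x = 1. Proof. reflexivity. Qed.
Lemma leg1 x : legendre 1 x = x. Proof. reflexivity. Qed.
Lemma legSS m x : legendre (S (S m)) x =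
  ((2 * INR m + 3) * x * legendre (S m) x - (INR m + 1) * legendre m x) / (INR m + 2).
Proof.
  unfold legendre. simpl legendre_pair.
  destruct (legendre_pair m x) as [p q]. simpl. reflexivity.
Qed.

Lemma Cf_leg2 m : C1 (legendre m) /\ C1 (legendre (S m)).
Proof.
  induction m.
  - split. apply (Cf_ext _ _ (fun _ => 1)). intros; reflexivity. apply Cf_const.
    apply (Cf_ext _ _ (fun x => x)). intros; reflexivity. apply Cf_id.
  - destruct IHm as [H0 H1]. split; auto.
    apply (Cf_ext _ _ (fun x => ((2 * INR m + 3) * x * legendre (S m) x - (INR m + 1) * legendre m x) * / (INR m + 2))).
    intros; rewrite legSS; reflexivity.
    apply Cf_mult; [|apply Cf_const]. apply Cf_minus.
    apply Cf_mult; auto. apply Cf_scal, Cf_id. apply Cf_scal; auto.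
Qed.
Lemma Cf_leg m : C1 (legendre m). Proof. apply Cf_leg2. Qed.

Definition mom (k j : nat) : R := I1 (fun y => legendre k y * y ^ j).
Lemma Cf_mom k j : C1 (fun y => legendre k y * y ^ j).
Proof. apply Cf_mult. apply Cf_leg. apply Cf_pow, Cf_id. Qed.

Lemma mom_rec m j : (INR m + 2) * mom (S (S m)) j =
  (2 * INR m + 3) * mom (S m) (S j) - (INR m + 1) * mom m j.
Proof.
  unfold mom. rewrite <- !Int_scal; auto using m1le1, Cf_mom.
  rewrite <- Int_minus; auto using m1le1, Cf_mom, Cf_scal.
  apply Int_ext; auto using m1le1, Cf_mom, Cf_scal.
  intros x _. rewrite legSS. simpl. field.
  assert (0 <= INR m) by apply pos_INR. lra.
Qed.

Definition Cc (k i : nat) : R := INR (fact (k+i)) / (INR (fact i) * 2^k * INR (fact k)).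

Lemma INRpos n : 0 <= INR n. Proof. apply pos_INR. Qed.
Lemma fact_pos n : 0 < INR (fact n). Proof. apply lt_0_INR, lt_O_fact. Qed.

Lemma Cc0 i : Cc 0 i = 1.
Proof. unfold Cc. simpl. field. apply not_0_INR, fact_neq_0. Qed.

Lemma CcS k i : Cc (S k) i * (2 * INR (S k)) = Cc k i * INR (S (k+i)).
Proof. unfold Cc. replace (S k + i)%nat with (S (k+i)) by lia. rewrite !fact_simpl, !mult_INR. simpl pow.
  pose proof (fact_pos i). pose proof (fact_pos k). pose proof (fact_pos (k+i)).
  pose proof (pow_lt 2 k ltac:(lra)). rewrite S_INR.
  field. repeat split; try lra; try (apply not_0_INR; lia). Qed.

Lemma Cci k i : Cc k (S i) * INR (S i) = Cc k i * INR (S (k+i)).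
Proof. unfold Cc. replace (k + S i)%nat with (S (k+i)) by lia. rewrite !fact_simpl, !mult_INR.
  pose proof (fact_pos i). pose proof (fact_pos k). pose proof (fact_pos (k+i)).
  pose proof (pow_lt 2 k ltac:(lra)).
  field. repeat split; try lra; try (apply not_0_INR; lia). Qed.

Definition Pk k := (forall j, (j < k)%nat -> mom k j = 0) /\ (forall i, mom k (k+i) = Cc k i * w k i).



Lemma P0k : Pk 0.
Proof. split. intros; lia. intros i. rewrite Cc0. unfold mom, w. simpl (0+i)%nat.
  rewrite Rmult_1_l. apply Int_ext; auto using m1le1, Cf_mom. Qed.

Lemma P1k : Pk 1.
Proof. split.
  - intros j Hj. replace j with 0%nat by lia. rewrite <- w01. unfold mom, w.
    apply Int_ext; auto using m1le1, Cf_mom. intros; rewrite leg1; simpl; ring.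
  - intros i. assert (E : mom 1 (1+i) = w 0 (i+2)).
    { unfold mom, w. apply Int_ext; auto using m1le1, Cf_mom. intros; rewrite leg1; simpl.
      rewrite pow_add. simpl. ring. }
    rewrite E. pose proof (W3 0 i). pose proof (W4 0 i). pose proof (CcS 0 i). rewrite Cc0 in H1.
    simpl (2*0+i+3)%nat in *. simpl (0+i)%nat in *.
    assert (0 < INR (i+3)) by (apply lt_0_INR; lia).
    apply (Rmult_eq_reg_l (INR (i+3))); [|lra]. rewrite H0.
    rewrite !S_INR, !plus_INR in *. simpl in *.
    assert (Hc : Cc 1 i = (INR i + 1) / 2) by lra.
    rewrite Hc.
    replace ((INR i + (1 + 1 + 1)) * ((INR i + 1) / 2 * w 1 i)) with ((INR i + 1) / 2 * ((INR i + (1+1+1)) * w 1 i)) by ring.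
    rewrite H. field.
Qed.

Lemma alg_step (K I C u w1 w2 w3 w4 c1 c2 c3 c4 c5 : R) (hK: 0<=K) (hI: 0<=I)
  (h1 : (2*K+I+3) * w1 = 2*(K+1) * u)
  (h2 : (2*K+I+3) * w2 = (I+1) * u)
  (h3 : (2*(K+1)+I+3) * w3 = (I+1) * w1)
  (h4 : (2*(K+1)+I+3) * w4 = 2*(K+2) * w1)
  (e1 : c1 * (2*(K+1)) = C * (K+I+1))
  (e2 : c2 * (2*(K+2)) = c1 * (K+I+2))
  (e3 : c3 * (I+1) = C * (K+I+1))
  (e4 : c4 * (I+2) = c3 * (K+I+2))
  (e5 : c5 * (2*(K+1)) = c4 * (K+I+3)) :
  (K+2) * (c2 * w4) = (2*K+3) * (c5 * w3) - (K+1) * (c4 * w2).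
Proof.
  assert (E1 : w1 = 2*(K+1)*u/(2*K+I+3)).
  { apply (Rmult_eq_reg_l (2*K+I+3)); [rewrite h1; field|]; lra. }
  assert (E2 : w2 = (I+1)*u/(2*K+I+3)).
  { apply (Rmult_eq_reg_l (2*K+I+3)); [rewrite h2; field|]; lra. }
  assert (E3 : w3 = (I+1)*w1/(2*(K+1)+I+3)).
  { apply (Rmult_eq_reg_l (2*(K+1)+I+3)); [rewrite h3; field|]; lra. }
  assert (E4 : w4 = 2*(K+2)*w1/(2*(K+1)+I+3)).
  { apply (Rmult_eq_reg_l (2*(K+1)+I+3)); [rewrite h4; field|]; lra. }
  assert (F1 : c1 = C * (K+I+1) / (2*(K+1))).
  { apply (Rmult_eq_reg_r (2*(K+1))); [rewrite e1; field|]; lra. }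
  assert (F2 : c2 = c1 * (K+I+2) / (2*(K+2))).
  { apply (Rmult_eq_reg_r (2*(K+2))); [rewrite e2; field|]; lra. }
  assert (F3 : c3 = C * (K+I+1) / (I+1)).
  { apply (Rmult_eq_reg_r (I+1)); [rewrite e3; field|]; lra. }
  assert (F4 : c4 = c3 * (K+I+2) / (I+2)).
  { apply (Rmult_eq_reg_r (I+2)); [rewrite e4; field|]; lra. }
  assert (F5 : c5 = c4 * (K+I+3) / (2*(K+1))).
  { apply (Rmult_eq_reg_r (2*(K+1))); [rewrite e5; field|]; lra. }
  rewrite F2, F1, F5, F4, F3, E4, E3, E2, E1.
  field. repeat split; lra.
Qed.

Lemma eqlem a a' b b' X Y : a = a' -> b = b' -> a' * X = b' * Y -> a * X = b * Y.
Proof. intros; subst; auto. Qed.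
Lemma eqlem2 a a' b b' X Y : a = a' -> b = b' -> X * a' = Y * b' -> X * a = Y * b.
Proof. intros; subst; auto. Qed.

Lemma PkSS k : Pk k -> Pk (S k) -> Pk (S (S k)).
Proof.
  intros [Z0 E0] [Z1 E1].
  assert (HK := INRpos k).
  split.
  - intros j Hj. pose proof (mom_rec k j) as R.
    assert (Hm : (2 * INR k + 3) * mom (S k) (S j) - (INR k + 1) * mom k j = 0).
    { destruct (Nat.lt_trichotomy j k) as [Hl|[He|Hg]].
      - rewrite Z1, Z0 by lia. ring.
      - subst j.
        assert (A1 : mom (S k) (S k) = Cc (S k) 0 * w (S k) 0) by (rewrite <- E1; f_equal; lia).
        assert (A0 : mom k k = Cc k 0 * w k 0) by (rewrite <- E0; f_equal; lia).
        rewrite A1, A0. pose proof (W3 k 0) as H3. pose proof (CcS k 0) as H4.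
        rewrite Nat.add_0_r in H3, H4.
        assert (X1 : INR (2*k+3) = 2 * INR k + 3) by (rewrite plus_INR, mult_INR; simpl; ring).
        assert (X2 : INR (k+1) = INR k + 1) by (rewrite plus_INR; simpl; ring).
        rewrite X1, X2 in H3. rewrite !S_INR in H4.
        replace ((2 * INR k + 3) * (Cc (S k) 0 * w (S k) 0)) with (Cc (S k) 0 * ((2 * INR k + 3) * w (S k) 0)) by ring.
        rewrite H3.
        replace (Cc (S k) 0 * (2 * (INR k + 1) * w k 0)) with ((Cc (S k) 0 * (2 * (INR k + 1))) * w k 0) by ring.
        rewrite H4. ring.
      - assert (j = S k) by lia. subst j.
        assert (A1 : mom (S k) (S (S k)) = Cc (S k) 1 * w (S k) 1) by (rewrite <- E1; f_equal; lia).
        assert (A0 : mom k (S k) = Cc k 1 * w k 1) by (rewrite <- E0; f_equal; lia).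
        rewrite A1, A0, !w_1. ring. }
    rewrite Hm in R. assert (0 < INR k + 2) by lra. nra.
  - intros i. pose proof (mom_rec k (S (S k) + i)) as R.
    assert (A1 : mom (S k) (S (S (S k) + i)) = Cc (S k) (i+2) * w (S k) (i+2)) by (rewrite <- E1; f_equal; lia).
    assert (A0 : mom k (S (S k) + i) = Cc k (i+2) * w k (i+2)) by (rewrite <- E0; f_equal; lia).
    rewrite A1, A0 in R.
    assert (0 < INR k + 2) by lra.
    apply (Rmult_eq_reg_l (INR k + 2)); [|lra]. rewrite R.
    symmetry.
    assert (N : forall n, INR (S n) = INR n + 1) by (intros; apply S_INR).
    apply (alg_step (INR k) (INR i) (Cc k i) (w k i) (w (S k) i) (w k (i+2)) (w (S k) (i+2))
      (w (S (S k)) i) (Cc (S k) i) (Cc (S (S k)) i) (Cc k (i+1)) (Cc k (i+2)) (Cc (S k) (i+2))); auto.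
    + apply INRpos.
    + (eapply eqlem; [ idtac | idtac | apply (W3 k i) ]); rewrite ?N, ?plus_INR, ?mult_INR; simpl; ring.
    + (eapply eqlem; [ idtac | idtac | apply (W4 k i) ]); rewrite ?N, ?plus_INR, ?mult_INR; simpl; ring.
    + (eapply eqlem; [ idtac | idtac | apply (W4 (S k) i) ]); rewrite ?N, ?plus_INR, ?mult_INR, ?N; simpl; ring.
    + (eapply eqlem; [ idtac | idtac | apply (W3 (S k) i) ]); rewrite ?N, ?plus_INR, ?mult_INR, ?N; simpl; ring.
    + (eapply eqlem2; [ idtac | idtac | apply (CcS k i) ]); rewrite ?N, ?plus_INR, ?mult_INR, ?N; simpl; ring.
    + (eapply eqlem2; [ idtac | idtac | apply (CcS (S k) i) ]); rewrite ?N, ?plus_INR, ?mult_INR, ?N; simpl; ring.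
    + replace (i+1)%nat with (S i) by lia.
      (eapply eqlem2; [ idtac | idtac | apply (Cci k i) ]); rewrite ?N, ?plus_INR, ?mult_INR, ?N; simpl; ring.
    + replace (i+2)%nat with (S (S i)) by lia. replace (i+1)%nat with (S i) by lia.
      (eapply eqlem2; [ idtac | idtac | apply (Cci k (S i)) ]); rewrite ?N, ?plus_INR, ?mult_INR, ?N; simpl; ring.
    + (eapply eqlem2; [ idtac | idtac | apply (CcS k (i+2)) ]); rewrite ?N, ?plus_INR, ?mult_INR, ?N; simpl; ring.
Qed.

Lemma Pk_all k : Pk k.
Proof.
  assert (H : forall k, Pk k /\ Pk (S k)).
  { induction k0. split; [apply P0k|apply P1k]. destruct IHk0; split; auto. apply PkSS; auto. }
  apply H.
Qed.


Fixpoint coef (j : nat) (A B : R) : R :=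
  match j with O => A | S j' => coef j' B (- A) end.

Definition T (N : nat) (A B th : R) : R :=
  sum_f_R0 (fun j => coef j A B / INR (fact j) * th ^ j) N.

Lemma coef_opp j : forall A B, coef j (- A) (- B) = - coef j A B.
Proof. induction j; intros; simpl; auto. Qed.

Lemma coef_negB j : forall A B, coef j A (- B) = (-1)^j * coef j A B.
Proof. induction j; intros; simpl. ring.
  rewrite IHj. replace A with (- - A) at 1 by ring. rewrite coef_opp. ring. Qed.

Lemma T_negB N A B th : T N A B (- th) = T N A (- B) th.
Proof. unfold T. apply sum_eq. intros j _. rewrite coef_negB.
  replace (- th) with ((-1) * th) by ring. rewrite Rpow_mult_distr. field.
  apply not_0_INR, fact_neq_0. Qed.

Lemma T_at0 N A B : T N A B 0 = A.
Proof. unfold T. induction N; simpl. field.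
  rewrite IHN. rewrite Rmult_0_l. ring. Qed.

Lemma T_deriv N A B th : derivable_pt_lim (T (S N) A B) th (T N B (- A) th).
Proof.
  replace (T N B (- A) th) with
    (sum_f_R0 (fun n => INR (S n) * (coef (S n) A B / INR (fact (S n))) * th ^ n) (pred (S N))).
  unfold T. apply (derivable_pt_lim_fs (fun j => coef j A B / INR (fact j)) th (S N)). lia.
  unfold T. simpl pred. apply sum_eq. intros n _. simpl coef.
  rewrite fact_simpl, mult_INR. field. split. apply not_0_INR, fact_neq_0. apply not_0_INR; lia.
Qed.

Lemma T0_deriv A B th : derivable_pt_lim (T 0 A B) th 0.
Proof. unfold T. simpl. apply derivable_pt_lim_const. Qed.

Lemma Rabs_le_inv' a b : Rabs a <= b -> -b <= a <= b.
Proof. unfold Rabs; destruct (Rcase_abs a); intros; lra. Qed.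
Lemma cmp_bound (g g' : R -> R) (M th : R) (N : nat) : 0 < th -> g 0 = 0 ->
  (forall s, 0 <= s <= th -> derivable_pt_lim g s (g' s)) ->
  (forall s, 0 <= s <= th -> Rabs (g' s) <= M * s ^ N / INR (fact N)) ->
  Rabs (g th) <= M * th ^ (S N) / INR (fact (S N)).
Proof.
  intros Hth H0 Hd Hb.
  assert (Hp : forall s, derivable_pt_lim (fun s => M * s ^ S N / INR (fact (S N))) s (M * s ^ N / INR (fact N))).
  { intros s. replace (M * s ^ N / INR (fact N)) with (M * (INR (S N) * s ^ pred (S N)) * / INR (fact (S N))).
    apply derivable_pt_lim_scal_right. apply derivable_pt_lim_scal. apply derivable_pt_lim_pow.
    rewrite fact_simpl, mult_INR. simpl pred. field. split. apply not_0_INR, fact_neq_0. apply not_0_INR; lia. }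
  assert (Z : M * 0 ^ S N / INR (fact (S N)) = 0) by (rewrite pow_i by lia; field; apply not_0_INR, fact_neq_0).
  apply Rabs_le. split.
  - destruct (MVT_cor2 (fun s => M * s ^ S N / INR (fact (S N)) + g s) (fun s => M * s ^ N / INR (fact N) + g' s) 0 th) as [c [Hc Hci]]; auto.
    intros; apply derivable_pt_lim_plus; auto.
    rewrite Z, H0 in Hc. assert (Hb' := Hb c ltac:(lra)). apply Rabs_le_inv' in Hb'.
    assert (0 <= (M * c ^ N / INR (fact N) + g' c) * (th - 0)) by (apply Rmult_le_pos; lra). lra.
  - destruct (MVT_cor2 (fun s => M * s ^ S N / INR (fact (S N)) - g s) (fun s => M * s ^ N / INR (fact N) - g' s) 0 th) as [c [Hc Hci]]; auto.
    intros; apply derivable_pt_lim_minus; auto.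
    rewrite Z, H0 in Hc. assert (Hb' := Hb c ltac:(lra)). apply Rabs_le_inv' in Hb'.
    assert (0 <= (M * c ^ N / INR (fact N) - g' c) * (th - 0)) by (apply Rmult_le_pos; lra). lra.
Qed.

Lemma Rabs_ABcs A B th : Rabs (A * cos th + B * sin th) <= sqrt (A^2 + B^2).
Proof.
  rewrite <- sqrt_Rsqr_abs. apply sqrt_le_1_alt.
  pose proof (sin2_cos2 th). unfold Rsqr in *.
  set (c := cos th) in *. set (s := sin th) in *.
  assert (E : (A * c + B * s) * (A * c + B * s) = (A^2 + B^2) * (s * s + c * c) - (A * s - B * c) * (A * s - B * c)) by ring.
  rewrite E, H. pose proof (Rle_0_sqr (A * s - B * c)). unfold Rsqr in *. lra.
Qed.

Lemma Rabs_ABcs' A B th : Rabs (A * cos th + B * sin th) <= Rabs A + Rabs B.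
Proof. eapply Rle_trans. apply Rabs_triang. rewrite !Rabs_mult.
  pose proof (COS_bound th). pose proof (SIN_bound th).
  assert (Rabs (cos th) <= 1) by (apply Rabs_le; lra).
  assert (Rabs (sin th) <= 1) by (apply Rabs_le; lra).
  pose proof (Rabs_pos A). pose proof (Rabs_pos B). nra. Qed.

Lemma taylor_pos N : forall A B th, 0 < th ->
  Rabs (A * cos th + B * sin th - T N A B th) <= (Rabs A + Rabs B) * th ^ (S N) / INR (fact (S N)).
Proof.
  induction N; intros A B th Hth.
  - apply (cmp_bound (fun s => A * cos s + B * sin s - T 0 A B s) (fun s => B * cos s + (- A) * sin s)); auto.
    + rewrite T_at0, cos_0, sin_0; ring.
    + intros s _. replace (B * cos s + - A * sin s) with (A * (- sin s) + B * cos s - 0) by ring.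
      apply derivable_pt_lim_minus. apply derivable_pt_lim_plus.
      apply derivable_pt_lim_scal, derivable_pt_lim_cos. apply derivable_pt_lim_scal, derivable_pt_lim_sin.
      apply T0_deriv.
    + intros s _. simpl. replace (1 / 1) with 1 by field. rewrite Rmult_1_r, Rdiv_1_r.
      eapply Rle_trans. apply Rabs_ABcs'. rewrite Rabs_Ropp. lra.
  - apply (cmp_bound (fun s => A * cos s + B * sin s - T (S N) A B s) (fun s => B * cos s + (- A) * sin s - T N B (- A) s)); auto.
    + rewrite T_at0, cos_0, sin_0; ring.
    + intros s _. replace (B * cos s + - A * sin s) with (A * (- sin s) + B * cos s) by ring.
      apply derivable_pt_lim_minus. apply derivable_pt_lim_plus.
      apply derivable_pt_lim_scal, derivable_pt_lim_cos. apply derivable_pt_lim_scal, derivable_pt_lim_sin.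
      apply T_deriv.
    + intros s Hs. destruct (Req_dec s 0) as [->|Hs0].
      * rewrite T_at0, cos_0, sin_0. replace (B * 1 + - A * 0 - B) with 0 by ring.
        rewrite Rabs_R0. simpl. rewrite Rmult_0_l, Rmult_0_r, Rdiv_0_l. lra.
      * eapply Rle_trans. apply IHN. lra. rewrite Rabs_Ropp, (Rplus_comm (Rabs B)). apply Rle_refl.
Qed.

Lemma taylor N A B th :
  Rabs (A * cos th + B * sin th - T N A B th) <= (Rabs A + Rabs B) * Rabs th ^ (S N) / INR (fact (S N)).
Proof.
  destruct (Rtotal_order th 0) as [Hn|[Hz|Hp]].
  - replace th with (- (- th)) by ring. rewrite T_negB, cos_neg, sin_neg, Rabs_Ropp.
    rewrite (Rabs_right (- th)) by lra.
    replace (Rabs A + Rabs B) with (Rabs A + Rabs (- B)) by (rewrite Rabs_Ropp; ring).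
    replace (A * cos (- th) + B * - sin (- th)) with (A * cos (- th) + (- B) * sin (- th)) by ring.
    apply taylor_pos; lra.
  - subst. rewrite T_at0, cos_0, sin_0, Rabs_R0. simpl.
    replace (A * 1 + B * 0 - A) with 0 by ring. rewrite Rabs_R0, Rmult_0_l, Rmult_0_r, Rdiv_0_l; lra.
  - rewrite (Rabs_right th) by lra. apply taylor_pos; lra.
Qed.

Fixpoint sh (k : nat) (A B : R) : R * R :=
  match k with O => (A, B) | S k' => sh k' B (- A) end.

Lemma coef_sh k : forall A B i, coef (k + i) A B = coef i (fst (sh k A B)) (snd (sh k A B)).
Proof. induction k; intros; simpl; auto. Qed.

Lemma sh_norm k : forall A B, fst (sh k A B) ^ 2 + snd (sh k A B) ^ 2 = A^2 + B^2 /\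
  Rabs (fst (sh k A B)) + Rabs (snd (sh k A B)) = Rabs A + Rabs B.
Proof. induction k; intros. simpl; auto. simpl sh. destruct (IHk B (- A)) as [H1 H2]. rewrite H1, H2, Rabs_Ropp.
  split; ring. Qed.


Lemma sum_mult_r (F : nat -> R) c N : sum_f_R0 F N * c = sum_f_R0 (fun j => F j * c) N.
Proof. induction N; simpl; auto. rewrite <- IHN. ring. Qed.
Lemma sum_mult_l (F : nat -> R) c N : c * sum_f_R0 F N = sum_f_R0 (fun j => c * F j) N.
Proof. induction N; simpl; auto. rewrite <- IHN. ring. Qed.

Lemma Cf_monom j : C1 (fun y => y ^ j). Proof. apply Cf_pow, Cf_id. Qed.

Lemma kernel (g : R -> R) (d : nat -> R) N : C1 g ->
  (fun x => I1 (fun y => sum_f_R0 (fun j => d j * (x*y)^j) N * g y)) =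
  (fun x => sum_f_R0 (fun j => d j * I1 (fun y => y^j * g y) * x^j) N).
Proof.
  intros Hg. apply functional_extensionality. intros x.
  rewrite (Int_ext _ _ m1le1 _ (fun y => sum_f_R0 (fun j => (d j * x^j) * (y^j * g y)) N)).
  - rewrite Int_sum; auto using m1le1.
    + apply sum_eq. intros j _. rewrite Int_scal; auto using m1le1. ring.
      apply Cf_mult; auto using Cf_monom.
    + intros j. apply Cf_scal. apply Cf_mult; auto using Cf_monom.
  - apply Cf_mult; auto. apply Cf_sum. intros j. apply Cf_scal. apply Cf_pow.
    apply Cf_scal, Cf_id.
  - intros y _. rewrite sum_mult_r. apply sum_eq. intros j _. rewrite Rpow_mult_distr. ring.
Qed.

Lemma kernel2 (f : R -> R) (e : nat -> R) N : C1 f ->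
  I1 (fun x => f x * sum_f_R0 (fun j => e j * x^j) N) =
  sum_f_R0 (fun j => e j * I1 (fun x => f x * x^j)) N.
Proof.
  intros Hf.
  rewrite (Int_ext _ _ m1le1 _ (fun x => sum_f_R0 (fun j => e j * (f x * x^j)) N)).
  - rewrite Int_sum; auto using m1le1.
    + apply sum_eq. intros j _. rewrite Int_scal; auto using m1le1.
      apply Cf_mult; auto using Cf_monom.
    + intros j. apply Cf_scal. apply Cf_mult; auto using Cf_monom.
  - apply Cf_mult; auto. apply Cf_sum. intros j. apply Cf_scal. apply Cf_monom.
  - intros y _. rewrite sum_mult_l. apply sum_eq. intros j _. ring.
Qed.

Lemma sum_shift (F : nat -> R) k : (forall j, (j < k)%nat -> F j = 0) ->
  forall M, sum_f_R0 F (k + M) = sum_f_R0 (fun i => F (k + i)%nat) M.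
Proof.
  intros HZ.
  assert (H0 : forall n, (n < k)%nat -> sum_f_R0 F n = 0).
  { induction n; intros; simpl. apply HZ; lia. rewrite IHn, HZ by lia. ring. }
  induction M.
  - simpl. rewrite Nat.add_0_r. destruct k. reflexivity. simpl. rewrite H0 by lia. ring.
  - replace (k + S M)%nat with (S (k + M)) by lia. simpl. rewrite IHM. do 2 f_equal. lia.
Qed.

Lemma Cf_cos_lin al : C1 (fun y => cos (al * y)).
Proof. apply Cf_cont. apply derivable_continuous. reg. Qed.
Lemma Cf_sin_lin al : C1 (fun y => sin (al * y)).
Proof. apply Cf_cont. apply derivable_continuous. reg. Qed.

Lemma Cf_T N A B al : C1 (fun y => T N A B (al * y)).
Proof. unfold T. apply Cf_sum. intros j. apply Cf_scal. apply Cf_pow. apply Cf_scal, Cf_id. Qed.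

Lemma T_expand N A B c x y :
  T N A B (c * x * y) = sum_f_R0 (fun j => (coef j A B / INR (fact j) * c ^ j) * (x*y)^j) N.
Proof. unfold T. apply sum_eq. intros j _. replace (c * x * y) with (c * (x * y)) by ring.
  rewrite Rpow_mult_distr. ring. Qed.

Lemma cv_small (c : R) (eps : R) : 0 < eps -> exists N0, forall n, (n >= N0)%nat -> c ^ n / INR (fact n) < eps.
Proof.
  intros He. destruct (cv_speed_pow_fact c eps He) as [N0 HN]. exists N0. intros n Hn.
  specialize (HN n Hn). unfold Rdist in HN. rewrite Rminus_0_r in HN.
  eapply Rle_lt_trans; [apply Rle_abs|]; auto.
Qed.

Lemma bound_int f h E : C1 f -> C1 h -> (forall x, -1 <= x <= 1 -> Rabs (h x) <= E) ->
  Rabs (I1 (fun x => f x * h x)) <= I1 (fun x => Rabs (f x)) * E.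
Proof.
  intros Hf Hh HE. eapply Rle_trans. apply Int_abs; auto using m1le1, Cf_mult.
  rewrite Rmult_comm.
  rewrite <- (Int_scal _ _ m1le1 E (fun x => Rabs (f x))) by (apply Cf_abs; auto).
  apply Int_mono; auto using m1le1. apply Cf_abs, Cf_mult; auto. apply Cf_scal, Cf_abs; auto.
  intros x Hx. rewrite Rabs_mult. rewrite Rmult_comm. apply Rmult_le_compat_r. apply Rabs_pos. auto.
Qed.

Lemma err_int f g h E : C1 f -> C1 g -> C1 h -> (forall x, -1 <= x <= 1 -> Rabs (g x - h x) <= E) ->
  Rabs (I1 (fun x => f x * g x) - I1 (fun x => f x * h x)) <= I1 (fun x => Rabs (f x)) * E.
Proof.
  intros Hf Hg Hh HE. rewrite <- Int_minus; auto using m1le1, Cf_mult.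
  rewrite (Int_ext _ _ m1le1 _ (fun x => f x * (g x - h x))).
  apply bound_int; auto. apply Cf_minus; auto.
  apply Cf_minus; apply Cf_mult; auto. intros; ring.
Qed.

Lemma abs_cxy c x y : 0 <= c -> -1 <= x <= 1 -> -1 <= y <= 1 -> Rabs (c * x * y) <= c.
Proof. intros Hc Hx Hy. rewrite !Rabs_mult, (Rabs_right c) by lra.
  assert (Rabs x <= 1) by (apply Rabs_le; lra). assert (Rabs y <= 1) by (apply Rabs_le; lra).
  pose proof (Rabs_pos x). pose proof (Rabs_pos y).
  assert (c * Rabs x <= c) by nra. assert (0 <= c * Rabs x) by nra. nra. Qed.

Lemma taylor_c N A B c x y : 0 <= c -> -1 <= x <= 1 -> -1 <= y <= 1 ->
  Rabs (A * cos (c*x*y) + B * sin (c*x*y) - T N A B (c*x*y)) <= (Rabs A + Rabs B) * c ^ (S N) / INR (fact (S N)).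
Proof.
  intros. eapply Rle_trans. apply taylor. unfold Rdiv. apply Rmult_le_compat_r.
  left; apply Rinv_0_lt_compat, fact_pos. apply Rmult_le_compat_l.
  pose proof (Rabs_pos A); pose proof (Rabs_pos B); lra.
  apply pow_incr. split. apply Rabs_pos. apply abs_cxy; auto.
Qed.

Lemma lam_bound psi k : C1 psi -> I1 (fun y => psi y ^ 2) = 1 ->
  I1 (fun x => Rabs (x ^ k * psi x)) <= sqrt (2 / INR (2*k+1)).
Proof.
  intros Hpsi Hn.
  assert (Hd : 0 < INR (2*k+1)) by (apply lt_0_INR; lia).
  set (L := sqrt (2 / INR (2*k+1))).
  assert (HL : 0 < L) by (apply sqrt_lt_R0; apply Rdiv_lt_0_compat; lra).
  assert (HL2 : L * L = 2 / INR (2*k+1)) by (apply sqrt_sqrt; left; apply Rdiv_lt_0_compat; lra).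
  assert (Hm : I1 (fun x => x ^ (2*k)) = 2 / INR (2*k+1)).
  { rewrite <- w0_even. unfold w. apply Int_ext; auto using m1le1, Cf_monom. intros; simpl; ring. }
  assert (H : I1 (fun x => Rabs (x ^ k * psi x)) * 2 <= I1 (fun x => L * psi x ^ 2 + / L * x ^ (2*k))).
  { rewrite Rmult_comm. rewrite <- (Int_scal _ _ m1le1 2 (fun x => Rabs (x ^ k * psi x))).
    2:{ apply Cf_abs, Cf_mult; auto using Cf_monom. }
    apply Int_mono; auto using m1le1. apply Cf_scal, Cf_abs, Cf_mult; auto using Cf_monom.
    apply Cf_plus; apply Cf_scal; auto using Cf_monom. apply Cf_pow; auto.
    intros x _. rewrite Rabs_mult. set (p := x^k). set (q := psi x).
    assert (E1 : x^(2*k) = p*p) by (unfold p; rewrite <- pow_add; f_equal; lia).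
    rewrite E1.
    assert (Ep : Rabs p * Rabs p = p * p) by (rewrite <- Rabs_mult; apply Rabs_pos_eq; pose proof (Rle_0_sqr p); unfold Rsqr in *; lra).
    assert (Eq : Rabs q * Rabs q = q * q) by (rewrite <- Rabs_mult; apply Rabs_pos_eq; pose proof (Rle_0_sqr q); unfold Rsqr in *; lra).
    apply (Rmult_le_reg_l L); auto.
    replace (L * (L * q ^ 2 + / L * (p * p))) with ((L * Rabs q) * (L * Rabs q) + Rabs p * Rabs p) by (rewrite Ep; replace (L * Rabs q * (L * Rabs q)) with (L * L * (Rabs q * Rabs q)) by ring; rewrite Eq; field; lra).
    pose proof (Rle_0_sqr (L * Rabs q - Rabs p)). unfold Rsqr in *. nra. }
  rewrite (Int_plus _ _ m1le1) in H by (apply Cf_scal; auto using Cf_monom, Cf_pow).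
  rewrite (Int_scal _ _ m1le1) in H by (auto using Cf_monom, Cf_pow).
  rewrite (Int_scal _ _ m1le1) in H by (auto using Cf_monom, Cf_pow).
  rewrite Hn, Hm in H.
  rewrite <- HL2 in H. replace (L * 1 + / L * (L * L)) with (L * 2) in H by (field; lra). lra.
Qed.

Lemma Cf_Pbar k : C1 (Pbar k).
Proof. apply (Cf_ext _ _ (fun x => sqrt (INR k + /2) * legendre k x)). intros; reflexivity.
  apply Cf_scal, Cf_leg. Qed.

Lemma Cf_acs psi a b c x : C1 psi -> C1 (fun y => (a * cos (c*x*y) + b * sin (c*x*y)) * psi y).
Proof. intros. apply Cf_mult; auto. apply Cf_plus; apply Cf_scal. apply Cf_cos_lin. apply Cf_sin_lin. Qed.

Lemma Cf_Tpsi N A B c x psi : C1 psi -> C1 (fun y => T N A B (c * x * y) * psi y).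
Proof. intros. apply Cf_mult; auto. apply Cf_T. Qed.

Lemma step1 psi a b c N x : C1 psi -> 0 <= c -> -1 <= x <= 1 ->
  Rabs (I1 (fun y => (a * cos (c*x*y) + b * sin (c*x*y)) * psi y) -
        sum_f_R0 (fun j => (coef j a b / INR (fact j) * c ^ j) * I1 (fun y => y^j * psi y) * x^j) N)
  <= I1 (fun y => Rabs (psi y)) * ((Rabs a + Rabs b) * c ^ (S N) / INR (fact (S N))).
Proof.
  intros Hpsi Hc Hx.
  rewrite <- (equal_f (kernel psi (fun j => coef j a b / INR (fact j) * c ^ j) N Hpsi) x).
  rewrite (Int_ext _ _ m1le1 (fun y => sum_f_R0 _ N * psi y) (fun y => psi y * T N a b (c*x*y))).
  rewrite (Int_ext _ _ m1le1 (fun y => (a * cos (c*x*y) + b * sin (c*x*y)) * psi y)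
                               (fun y => psi y * (a * cos (c*x*y) + b * sin (c*x*y)))).
  apply err_int; auto. apply Cf_plus; apply Cf_scal. apply Cf_cos_lin. apply Cf_sin_lin. apply Cf_T.
  intros y Hy. apply taylor_c; auto.
  apply Cf_acs; auto. intros; ring.
  apply Cf_mult; auto. apply Cf_sum. intros j. apply Cf_scal. apply Cf_pow. apply Cf_scal, Cf_id.
  intros y _. rewrite T_expand. ring.
Qed.

Lemma abs_tri u t : Rabs t <= Rabs u + Rabs (u - t).
Proof. unfold Rabs; repeat destruct Rcase_abs; lra. Qed.

Lemma Cf_g k : C1 (fun y => (1 - y^2)^k).
Proof. apply Cf_pow. apply Cf_minus. apply Cf_const. apply Cf_monom. Qed.

Lemma step3 A B c k M x : 0 <= c -> -1 <= x <= 1 ->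
  Rabs (sum_f_R0 (fun i => (coef i A B / INR (fact i) * c ^ i) * w k i * x^i) M)
  <= (sqrt (A^2 + B^2) + (Rabs A + Rabs B) * c ^ (S M) / INR (fact (S M))) * w k 0.
Proof.
  intros Hc Hx.
  rewrite (sum_eq _ (fun i => (coef i A B / INR (fact i) * c ^ i) * I1 (fun y => y^i * (1 - y^2)^k) * x^i)).
  2:{ intros i _. unfold w. f_equal. f_equal. apply Int_ext; auto using m1le1. apply Cf_poly_w. intros; ring. }
  rewrite <- (equal_f (kernel (fun y => (1 - y^2)^k) (fun j => coef j A B / INR (fact j) * c ^ j) M (Cf_g k)) x).
  rewrite (Int_ext _ _ m1le1 (fun y => sum_f_R0 _ M * (1 - y^2)^k) (fun y => (1 - y^2)^k * T M A B (c*x*y))).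
  2:{ apply Cf_mult. apply Cf_sum. intros j. apply Cf_scal. apply Cf_pow. apply Cf_scal, Cf_id. apply Cf_g. }
  2:{ intros y _. rewrite T_expand. ring. }
  replace (w k 0) with (I1 (fun y => Rabs ((1 - y^2)^k))).
  rewrite (Rmult_comm (sqrt _ + _)). apply bound_int. apply Cf_g. apply Cf_T.
  intros y Hy. eapply Rle_trans.
  2:{ apply Rplus_le_compat. apply (Rabs_ABcs A B (c*x*y)). apply (taylor_c M A B c x y); auto. }
  apply abs_tri.
  unfold w. apply Int_ext; auto using m1le1. apply Cf_abs, Cf_g.
  intros y Hy. rewrite Rabs_pos_eq. ring. apply pow_le.
  assert (y^2 <= 1) by (simpl; nra). lra.
Qed.

Lemma s_lam k : sqrt (INR k + / 2) * sqrt (2 / INR (2*k+1)) = 1.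
Proof.
  assert (0 <= INR k) by apply pos_INR.
  rewrite <- sqrt_mult. 2: lra. 2: apply Rlt_le, Rdiv_lt_0_compat; [lra| apply lt_0_INR; lia].
  replace ((INR k + / 2) * (2 / INR (2 * k + 1))) with 1. apply sqrt_1.
  rewrite plus_INR, mult_INR. simpl. field. lra.
Qed.

Lemma Cf_xkpsi k psi : C1 psi -> C1 (fun x => x ^ k * psi x).
Proof. intros; apply Cf_mult; auto using Cf_monom. Qed.

Lemma Cf_poly (e : nat -> R) N : C1 (fun x => sum_f_R0 (fun j => e j * x^j) N).
Proof. apply Cf_sum. intros j. apply Cf_scal, Cf_monom. Qed.

Lemma fixed_M c psi k M (hc : 0 < c) (Hpsi : C1 psi) (Hn : I1 (fun y => psi y ^ 2) = 1)
  (a b : R) (Q : R -> R) (HCQ : C1 Q)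
  (HQ : forall x, -1 <= x <= 1 -> I1 (fun y => (a * cos (c*x*y) + b * sin (c*x*y)) * psi y) = Q x)
  (Hab : a^2 + b^2 = I1 (fun x => Pbar k x * Q x)) :
  a^2 + b^2 <= c^k * w k 0 / (2^k * INR (fact k)) *
     (sqrt (a^2 + b^2) + (Rabs a + Rabs b) * c ^ (S M) / INR (fact (S M)))
   + I1 (fun x => Rabs (Pbar k x)) * (I1 (fun y => Rabs (psi y)) *
       ((Rabs a + Rabs b) * c ^ (S (k+M)) / INR (fact (S (k+M))))).
Proof.
  set (N := (k + M)%nat).
  set (d := fun j => coef j a b / INR (fact j) * c ^ j).
  set (v := fun j => I1 (fun y => y^j * psi y)).
  set (e2 := (Rabs a + Rabs b) * c ^ (S N) / INR (fact (S N))).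
  set (QN := fun x => sum_f_R0 (fun j => (d j * v j) * x^j) N).
  assert (Hi : Rabs (a^2 + b^2 - I1 (fun x => Pbar k x * QN x)) <=
               I1 (fun x => Rabs (Pbar k x)) * (I1 (fun y => Rabs (psi y)) * e2)).
  { rewrite Hab. apply err_int; auto. apply Cf_Pbar. apply Cf_poly.
    intros x Hx. rewrite <- HQ by auto. unfold QN.
    pose proof (step1 psi a b c N x Hpsi ltac:(lra) Hx) as H1. unfold d, v. exact H1. }
  set (s := sqrt (INR k + / 2)).
  assert (Hii : I1 (fun x => Pbar k x * QN x) = sum_f_R0 (fun j => d j * v j * (s * mom k j)) N).
  { unfold QN. rewrite kernel2 by apply Cf_Pbar. apply sum_eq. intros j _. f_equal.
    unfold mom. rewrite <- Int_scal; auto using m1le1, Cf_mom. apply Int_ext; auto using m1le1.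
    apply Cf_mult. apply Cf_Pbar. apply Cf_monom. intros; unfold Pbar, s; ring. }
  set (A' := fst (sh k a b)). set (B' := snd (sh k a b)).
  set (D := fun i => coef i A' B' / INR (fact i) * c ^ i).
  set (K' := s * c ^ k / (2 ^ k * INR (fact k))).
  assert (Hiv : sum_f_R0 (fun j => d j * v j * (s * mom k j)) N =
                K' * sum_f_R0 (fun i => D i * w k i * v (k + i)%nat) M).
  { unfold N. rewrite sum_shift.
    2:{ intros j Hj. destruct (Pk_all k) as [Z _]. rewrite Z by auto. ring. }
    rewrite sum_mult_l. apply sum_eq. intros i _.
    destruct (Pk_all k) as [_ E]. rewrite E.
    unfold d, D, K', A', B'. rewrite coef_sh. unfold Cc. rewrite pow_add.
    pose proof (fact_pos (k+i)). pose proof (fact_pos i). pose proof (fact_pos k).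
    pose proof (pow_lt 2 k ltac:(lra)).
    field. repeat split; lra. }
  assert (Hv : sum_f_R0 (fun i => D i * w k i * v (k + i)%nat) M =
               I1 (fun x => (x^k * psi x) * sum_f_R0 (fun i => (D i * w k i) * x^i) M)).
  { rewrite kernel2 by (apply Cf_xkpsi; auto). apply sum_eq. intros i _. f_equal.
    unfold v. apply Int_ext; auto using m1le1. apply Cf_mult; auto using Cf_monom.
    intros; rewrite pow_add; ring. }
  assert (Hnorm := sh_norm k a b). fold A' B' in Hnorm. destruct Hnorm as [Hn2 Hn1].
  set (e1 := (Rabs a + Rabs b) * c ^ (S M) / INR (fact (S M))).
  assert (Hvi : Rabs (I1 (fun x => (x^k * psi x) * sum_f_R0 (fun i => (D i * w k i) * x^i) M))
               <= I1 (fun x => Rabs (x^k * psi x)) * ((sqrt (a^2+b^2) + e1) * w k 0)).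
  { apply bound_int. apply Cf_xkpsi; auto. apply Cf_poly.
    intros x Hx. pose proof (step3 A' B' c k M x ltac:(lra) Hx) as H3.
    rewrite Hn2, Hn1 in H3. unfold D. exact H3. }
  assert (Hl := lam_bound psi k Hpsi Hn).
  assert (HK' : 0 <= K').
  { unfold K'. apply Rmult_le_pos. apply Rmult_le_pos. apply sqrt_pos. apply pow_le; lra.
    left; apply Rinv_0_lt_compat. apply Rmult_lt_0_compat. apply pow_lt; lra. apply fact_pos. }
  assert (Hw0 := w_k0_pos k).
  assert (He1 : 0 <= e1).
  { unfold e1. apply Rmult_le_pos. apply Rmult_le_pos. pose proof (Rabs_pos a); pose proof (Rabs_pos b); lra.
    apply pow_le; lra. left; apply Rinv_0_lt_compat, fact_pos. }
  assert (Hr : 0 <= sqrt (a^2+b^2)) by apply sqrt_pos.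
  assert (Hfin : Rabs (I1 (fun x => Pbar k x * QN x)) <=
     c^k * w k 0 / (2^k * INR (fact k)) * (sqrt (a^2 + b^2) + e1)).
  { rewrite Hii, Hiv, Hv, Rabs_mult, (Rabs_pos_eq K') by auto.
    eapply Rle_trans. apply Rmult_le_compat_l. auto. apply Hvi.
    eapply Rle_trans. apply Rmult_le_compat_l. auto. apply Rmult_le_compat_r.
    apply Rmult_le_pos; lra. apply Hl.
    right. unfold K'. pose proof (s_lam k) as Hs. fold s in Hs.
    pose proof (fact_pos k). pose proof (pow_lt 2 k ltac:(lra)).
    replace (s * c ^ k / (2 ^ k * INR (fact k)) * (sqrt (2 / INR (2 * k + 1)) * ((sqrt (a ^ 2 + b ^ 2) + e1) * w k 0)))
      with ((s * sqrt (2 / INR (2 * k + 1))) * (c ^ k / (2 ^ k * INR (fact k)) * ((sqrt (a ^ 2 + b ^ 2) + e1) * w k 0))) by (field; lra).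
    rewrite Hs. field; lra. }
  apply Rabs_le_inv' in Hi. apply Rabs_le_inv' in Hfin.
  fold e1. unfold N in e2. fold e2. lra.
Qed.

Lemma main_bound c psi mr mi k : 0 < c -> prolate_eigen c psi mr mi ->
  sqrt ((mr * I1 (fun x => Pbar k x * psi x))^2 + (mi * I1 (fun x => Pbar k x * psi x))^2)
  <= c^k * w k 0 / (2^k * INR (fact k)).
Proof.
  intros hc [Hpsi [[prn Hn] [Hcos Hsin]]].
  assert (Hn' : I1 (fun y => psi y ^ 2) = 1) by (rewrite (Int_eq _ _ _ prn); auto).
  set (beta := I1 (fun x => Pbar k x * psi x)).
  set (a := mr * beta). set (b := mi * beta).
  assert (HC : forall x, -1 <= x <= 1 -> I1 (fun y => cos (c*x*y) * psi y) = mr * psi x).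
  { intros x Hx. destruct (Hcos x Hx) as [p Hp]. rewrite (Int_eq _ _ _ p). auto. }
  assert (HS : forall x, -1 <= x <= 1 -> I1 (fun y => sin (c*x*y) * psi y) = mi * psi x).
  { intros x Hx. destruct (Hsin x Hx) as [p Hp]. rewrite (Int_eq _ _ _ p). auto. }
  set (Q := fun x => a * (mr * psi x) + b * (mi * psi x)).
  assert (HCQ : C1 Q). { unfold Q. apply Cf_plus; apply Cf_scal; apply Cf_scal; auto. }
  assert (HQ : forall x, -1 <= x <= 1 -> I1 (fun y => (a * cos (c*x*y) + b * sin (c*x*y)) * psi y) = Q x).
  { intros x Hx. unfold Q. rewrite <- HC, <- HS by auto.
    rewrite <- (Int_scal _ _ m1le1 a) by (apply Cf_mult; auto; apply Cf_cos_lin).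
    rewrite <- (Int_lin _ _ m1le1) by (try apply Cf_scal; apply Cf_mult; auto; try apply Cf_cos_lin; apply Cf_sin_lin).
    apply Int_ext; auto using m1le1. apply Cf_acs; auto. intros; ring. }
  assert (Hab : a^2 + b^2 = I1 (fun x => Pbar k x * Q x)).
  { rewrite (Int_ext _ _ m1le1 _ (fun x => (a*mr + b*mi) * (Pbar k x * psi x))).
    rewrite (Int_scal _ _ m1le1) by (apply Cf_mult; auto; apply Cf_Pbar). fold beta. unfold a, b; ring.
    apply Cf_mult; auto. apply Cf_Pbar.
    intros; unfold Q; ring. }
  fold a b.
  set (Bd := c^k * w k 0 / (2^k * INR (fact k))).
  set (r := sqrt (a^2 + b^2)).
  set (D0 := I1 (fun x => Rabs (Pbar k x)) * I1 (fun y => Rabs (psi y))).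
  set (Sab := Rabs a + Rabs b).
  assert (HBd : 0 <= Bd).
  { unfold Bd. pose proof (w_k0_pos k). pose proof (fact_pos k). pose proof (pow_lt 2 k ltac:(lra)).
    apply Rmult_le_pos. apply Rmult_le_pos. apply pow_le; lra. lra.
    left; apply Rinv_0_lt_compat, Rmult_lt_0_compat; lra. }
  assert (HD0 : 0 <= D0).
  { unfold D0. apply Rmult_le_pos; apply Int_nonneg; auto using m1le1.
    apply Cf_abs, Cf_Pbar. intros; apply Rabs_pos. apply Cf_abs; auto. intros; apply Rabs_pos. }
  assert (HS0 : 0 <= Sab) by (unfold Sab; pose proof (Rabs_pos a); pose proof (Rabs_pos b); lra).
  assert (Hr2 : r * r = a^2 + b^2) by (apply sqrt_sqrt; nra).
  assert (Hr0 : 0 <= r) by apply sqrt_pos.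
  assert (Hkey : r * r <= Bd * r).
  { apply le_epsilon. intros eps Heps.
    set (eps' := eps / ((Bd + D0) * Sab + 1)).
    assert (He' : 0 < eps') by (apply Rdiv_lt_0_compat; nra).
    destruct (cv_small c eps' He') as [N0 HN0].
    pose proof (fixed_M c psi k N0 hc Hpsi Hn' a b Q HCQ HQ Hab) as H.
    fold Bd r Sab in H.
    assert (h1 : c ^ S N0 / INR (fact (S N0)) < eps') by (apply HN0; lia).
    assert (h2 : c ^ S (k + N0) / INR (fact (S (k + N0))) < eps') by (apply HN0; lia).
    assert (h1' : 0 <= c ^ S N0 / INR (fact (S N0))) by (apply Rmult_le_pos; [apply pow_le; lra| left; apply Rinv_0_lt_compat, fact_pos]).
    assert (h2' : 0 <= c ^ S (k + N0) / INR (fact (S (k + N0)))) by (apply Rmult_le_pos; [apply pow_le; lra| left; apply Rinv_0_lt_compat, fact_pos]).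
    assert (Hepseq : eps' * ((Bd + D0) * Sab + 1) = eps) by (unfold eps'; field; nra).
    unfold Rdiv in H, h1, h2, h1', h2'.
    set (u1 := c ^ S N0 * / INR (fact (S N0))) in *.
    set (u2 := c ^ S (k + N0) * / INR (fact (S (k + N0)))) in *.
    replace (Sab * c ^ S N0 * / INR (fact (S N0))) with (Sab * u1) in H by (unfold u1; ring).
    replace (Sab * c ^ S (k + N0) * / INR (fact (S (k + N0)))) with (Sab * u2) in H by (unfold u2; ring).
    assert (Bd * (Sab * u1) <= Bd * (Sab * eps')) by (apply Rmult_le_compat_l; auto; apply Rmult_le_compat_l; lra).
    assert (D0 * (Sab * u2) <= D0 * (Sab * eps')) by (apply Rmult_le_compat_l; auto; apply Rmult_le_compat_l; lra).
    unfold D0 in *. nra. }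
  fold r.
  destruct (Req_dec r 0) as [Hz|Hnz]. rewrite Hz; auto.
  apply (Rmult_le_reg_l r). lra. lra.
Qed.


Notation Ip := (Int 0 (PI/2)).
Lemma hp : 0 <= PI/2. Proof. pose proof PI2_RGT_0; lra. Qed.

Definition Iw (p : nat) := Ip (fun x => sin x ^ p).

Lemma Cf_sinp p : Cf 0 (PI/2) (fun x => sin x ^ p).
Proof. apply Cf_pow. apply Cf_cont. apply continuity_sin. Qed.

Lemma Iw0 : Iw 0 = PI/2.
Proof. unfold Iw. rewrite (Int_ext _ _ hp _ (fun _ => 1)). rewrite Int_const. lra.
  apply Cf_sinp. intros; simpl; ring. Qed.

Lemma Iw1 : Iw 1 = 1.
Proof. unfold Iw. rewrite (Int_FTC _ _ hp _ (fun x => - cos x)). rewrite cos_PI2, cos_0. ring.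
  apply Cf_sinp. intros x _. replace (sin x ^ 1) with (- - sin x) by ring.
  apply derivable_pt_lim_opp, derivable_pt_lim_cos. Qed.

Lemma Iw_rec p : INR (p+2) * Iw (p+2) = INR (p+1) * Iw p.
Proof.
  apply Rminus_diag_uniq. unfold Iw.
  rewrite <- !(Int_scal _ _ hp) by apply Cf_sinp.
  rewrite <- (Int_minus _ _ hp) by (apply Cf_scal, Cf_sinp).
  rewrite (Int_FTC _ _ hp _ (fun x => - (cos x * sin x ^ (p+1)))).
  rewrite cos_PI2, sin_0, pow_i by lia. ring.
  apply Cf_minus; apply Cf_scal, Cf_sinp.
  intros x _.
  replace (INR (p + 2) * sin x ^ (p + 2) - INR (p + 1) * sin x ^ p) with
    (- ((- sin x) * sin x ^ (p+1) + cos x * (INR (p+1) * sin x ^ pred (p+1) * cos x))).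
  apply derivable_pt_lim_opp. apply (derivable_pt_lim_mult cos (fun x => sin x ^ (p+1))).
  apply derivable_pt_lim_cos.
  apply (derivable_pt_lim_comp sin (fun y => y ^ (p+1))). apply derivable_pt_lim_sin. apply derivable_pt_lim_pow.
  replace (pred (p+1)) with p by lia. rewrite !pow_add. pose proof (sin2_cos2 x). unfold Rsqr in H.
  rewrite !plus_INR. simpl. replace (cos x * ((INR p + 1) * sin x ^ p * cos x)) with ((INR p + 1) * sin x ^ p * (cos x * cos x)) by ring. replace (cos x * cos x) with (1 - sin x * sin x) by lra. ring.
Qed.

Lemma Iw_mono p : Iw (S p) <= Iw p.
Proof. unfold Iw. apply Int_mono; auto using hp, Cf_sinp. intros x Hx.
  assert (0 <= sin x) by (apply sin_ge_0; pose proof PI_RGT_0; lra).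
  assert (sin x <= 1) by (pose proof (SIN_bound x); lra).
  simpl. pose proof (pow_le (sin x) p H). nra. Qed.

Lemma Iw_nonneg p : 0 <= Iw p.
Proof. unfold Iw. apply Int_nonneg; auto using hp, Cf_sinp. intros x Hx. apply pow_le.
  apply sin_ge_0; pose proof PI_RGT_0; lra. Qed.

Lemma Iw_prod p : INR (p+1) * Iw p * Iw (S p) = PI / 2.
Proof. induction p.
  - simpl. rewrite Iw0, Iw1. ring.
  - pose proof (Iw_rec p). replace (S (S p)) with (p+2)%nat by lia.
    replace (S p + 1)%nat with (p+2)%nat by lia.
    rewrite <- IHp. replace (INR (p + 2) * Iw (S p) * Iw (p + 2)) with (Iw (S p) * (INR (p + 2) * Iw (p + 2))) by ring.
    rewrite H. ring.
Qed.

Lemma Iw_pos p : 0 < Iw p.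
Proof. pose proof (Iw_prod p). pose proof (Iw_nonneg p). pose proof (Iw_nonneg (S p)).
  pose proof PI_RGT_0. destruct H0 as [H0|H0]; auto. rewrite <- H0 in H. lra. Qed.

Lemma J_Iw k : w k 0 = 2 * Iw (2*k+1).
Proof. induction k. simpl. rewrite w00, Iw1; ring.
  pose proof (W3 k 0) as H. pose proof (Iw_rec (2*k+1)) as H1.
  replace (2 * S k + 1)%nat with (2*k+1+2)%nat by lia.
  assert (Hp : 0 < INR (2*k+1+2)) by (apply lt_0_INR; lia).
  apply (Rmult_eq_reg_l (INR (2*k+1+2))); [|lra].
  replace (INR (2 * k + 1 + 2) * (2 * Iw (2 * k + 1 + 2))) with (2 * (INR (2 * k + 1 + 2) * Iw (2 * k + 1 + 2))) by ring.
  rewrite H1. transitivity (2 * INR (k+1) * w k 0).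
  { rewrite <- H. f_equal. f_equal. lia. }
  rewrite IHk. rewrite !plus_INR, mult_INR. simpl. ring.
Qed.


Lemma rp_S s n : rising_prod s (S n) = rising_prod s n * (s + INR (S n)).
Proof. reflexivity. Qed.

Lemma rp_Iw k n : rising_prod (INR k + 3/2) n * Iw (2*k+2*n+3) = rising_prod (INR k + 1) n * Iw (2*k+1).
Proof.
  induction n.
  - change (rising_prod (INR k + 3/2) 0) with (INR k + 3/2).
    change (rising_prod (INR k + 1) 0) with (INR k + 1).
    pose proof (Iw_rec (2*k+1)). replace (2*k+2*0+3)%nat with (2*k+1+2)%nat by lia.
    apply (Rmult_eq_reg_l 2); [|lra].
    replace (2 * ((INR k + 3/2) * Iw (2*k+1+2))) with (INR (2*k+1+2) * Iw (2*k+1+2)) by (rewrite !plus_INR, mult_INR; simpl; field).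
    rewrite H. rewrite !plus_INR, mult_INR; simpl; field.
  - rewrite !rp_S. pose proof (Iw_rec (2*k+2*n+3)).
    replace (2*k+2*S n+3)%nat with (2*k+2*n+3+2)%nat by lia.
    replace (rising_prod (INR k + 3 / 2) n * (INR k + 3 / 2 + INR (S n)) * Iw (2 * k + 2 * n + 3 + 2))
      with (rising_prod (INR k + 3 / 2) n * ((INR k + 3 / 2 + INR (S n)) * Iw (2 * k + 2 * n + 3 + 2))) by ring.
    replace ((INR k + 3 / 2 + INR (S n)) * Iw (2 * k + 2 * n + 3 + 2)) with
      (/2 * (INR (2 * k + 2 * n + 3 + 2) * Iw (2 * k + 2 * n + 3 + 2))) by (rewrite S_INR, !plus_INR, !mult_INR; simpl; field).
    rewrite H.
    replace (/ 2 * (INR (2 * k + 2 * n + 3 + 1) * Iw (2 * k + 2 * n + 3))) with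
       ((INR k + 1 + INR (S n)) * Iw (2 * k + 2 * n + 3)) by (rewrite S_INR, !plus_INR, !mult_INR; simpl; field).
    replace (rising_prod (INR k + 3 / 2) n * ((INR k + 1 + INR (S n)) * Iw (2 * k + 2 * n + 3)))
      with ((INR k + 1 + INR (S n)) * (rising_prod (INR k + 3 / 2) n * Iw (2 * k + 2 * n + 3))) by ring.
    rewrite IHn. ring.
Qed.

Fixpoint q (n k : nat) : R :=
  match k with O => INR n + 1 | S k' => q n k' * (INR n + INR k' + 2) end.

Lemma q_S n k : q n (S k) = q n k * (INR n + INR k + 2). Proof. reflexivity. Qed.

Lemma fk_rp k n : INR (fact k) * rising_prod (INR k + 1) n = INR (fact (n + k + 1)).
Proof. induction n.
  - simpl. replace (k+1)%nat with (S k) by lia. rewrite fact_simpl, mult_INR, S_INR. ring.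
  - rewrite rp_S. replace (S n + k + 1)%nat with (S (n + k + 1)) by lia.
    rewrite fact_simpl, mult_INR, <- IHn. rewrite !S_INR, !plus_INR. simpl. ring.
Qed.

Lemma fn_q k n : INR (fact n) * q n k = INR (fact (n + k + 1)).
Proof. induction k.
  - simpl. replace (n+0+1)%nat with (S n) by lia. rewrite fact_simpl, mult_INR, S_INR. ring.
  - rewrite q_S. replace (n + S k + 1)%nat with (S (n + k + 1)) by lia.
    rewrite fact_simpl, mult_INR, <- IHk. rewrite !S_INR, !plus_INR. simpl. ring.
Qed.

Lemma q_ge n k : INR n ^ (S k) <= q n k.
Proof. induction k. simpl. lra. rewrite q_S, <- tech_pow_Rmult.
  pose proof (pos_INR n). pose proof (pos_INR k). pose proof (pow_le (INR n) (S k) H).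
  rewrite Rmult_comm. apply Rmult_le_compat; lra. Qed.

Lemma q_le n k : (k < n)%nat -> q n k <= (2 * INR n) ^ (S k).
Proof. induction k; intros Hk.
  - simpl. assert (1 <= INR n) by (apply (le_INR 1); lia). lra.
  - rewrite q_S, <- tech_pow_Rmult.
    assert (INR k + 2 <= INR n) by (replace 2 with (INR 2) by (simpl; ring); rewrite <- plus_INR; apply le_INR; lia).
    assert (0 <= q n k) by (eapply Rle_trans; [|apply q_ge]; apply pow_le, pos_INR).
    pose proof (IHk ltac:(lia)) as I. pose proof (pos_INR k). nra.
Qed.

Lemma q_pos n k : 0 < q n k.
Proof. induction k; simpl. pose proof (pos_INR n); lra.
  pose proof (pos_INR n); pose proof (pos_INR k); nra. Qed.

Lemma gauss_val k n : (0 < n)%nat ->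
  gauss_seq (INR k + 3/2) n =
  INR (fact k) * (INR n ^ (S k) / q n k) * (sqrt (INR n) * Iw (2*k+2*n+3)) / Iw (2*k+1).
Proof.
  intros Hn. unfold gauss_seq.
  assert (Hn' : 0 < INR n) by (apply lt_0_INR; lia).
  replace (INR k + 3/2) with (INR (S k) + /2) at 1 by (rewrite S_INR; field).
  rewrite Rpower_plus, Rpower_pow, Rpower_sqrt by auto.
  pose proof (rp_Iw k n) as H.
  pose proof (fk_rp k n) as H1. pose proof (fn_q k n) as H2.
  pose proof (Iw_pos (2*k+1)). pose proof (Iw_pos (2*k+2*n+3)). pose proof (q_pos n k).
  pose proof (fact_pos k). pose proof (fact_pos n).
  assert (Hr : rising_prod (INR k + 3/2) n = rising_prod (INR k + 1) n * Iw (2*k+1) / Iw (2*k+2*n+3)).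
  { apply (Rmult_eq_reg_r (Iw (2*k+2*n+3))). rewrite H. field. lra. lra. }
  assert (Hr1 : rising_prod (INR k + 1) n = INR (fact n) * q n k / INR (fact k)).
  { apply (Rmult_eq_reg_l (INR (fact k))). rewrite H1, <- H2. field. lra. lra. }
  rewrite Hr, Hr1. field. repeat split; try lra.
Qed.

Lemma cv_le u l U N : Un_cv u l -> (forall n, (n >= N)%nat -> u n <= U) -> l <= U.
Proof.
  intros Hc Hb. destruct (Rle_dec l U) as [H|H]; auto. exfalso.
  destruct (Hc (l - U) ltac:(lra)) as [N1 HN1].
  specialize (HN1 (max N N1) ltac:(lia)). specialize (Hb (max N N1) ltac:(lia)).
  unfold Rdist in HN1. apply Rabs_def2 in HN1. lra.
Qed.

Lemma cv_ge u l m N : Un_cv u l -> (forall n, (n >= N)%nat -> m <= u n) -> m <= l.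
Proof.
  intros Hc Hb. destruct (Rle_dec m l) as [H|H]; auto. exfalso.
  destruct (Hc (m - l) ltac:(lra)) as [N1 HN1].
  specialize (HN1 (max N N1) ltac:(lia)). specialize (Hb (max N N1) ltac:(lia)).
  unfold Rdist in HN1. apply Rabs_def2 in HN1. lra.
Qed.

Lemma sqrtIw_up k n : (0 < n)%nat -> sqrt (INR n) * Iw (2*k+2*n+3) <= sqrt PI / 2.
Proof.
  intros Hn. pose proof (Iw_prod (2*k+2*n+2)) as H. pose proof (Iw_mono (2*k+2*n+2)) as H2.
  replace (S (2*k+2*n+2)) with (2*k+2*n+3)%nat in * by lia.
  replace (2*k+2*n+2+1)%nat with (2*k+2*n+3)%nat in H by lia.
  pose proof (Iw_pos (2*k+2*n+3)). pose proof (Iw_pos (2*k+2*n+2)).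
  assert (Hn' : 0 < INR n) by (apply lt_0_INR; lia).
  assert (Hp : INR (2*k+2*n+3) = 2 * INR k + 2 * INR n + 3) by (rewrite !plus_INR, !mult_INR; simpl; ring).
  rewrite Hp in H. pose proof (pos_INR k).
  set (I := Iw (2*k+2*n+3)) in *. set (J := Iw (2*k+2*n+2)) in *.
  assert (HI : (2 * INR k + 2 * INR n + 3) * (I * I) <= PI / 2).
  { assert (0 <= (2 * INR k + 2 * INR n + 3) * I) by (apply Rmult_le_pos; lra).
    assert (0 <= ((2 * INR k + 2 * INR n + 3) * I) * (J - I)) by (apply Rmult_le_pos; lra).
    rewrite <- H. nra. }
  assert (HI2 : INR n * (I * I) <= PI / 4).
  { apply Rle_trans with ((2 * INR k + 2 * INR n + 3) * (I * I) / 2). 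
    assert (0 <= I * I) by nra. nra. lra. }
  rewrite <- (sqrt_Rsqr I) by lra. rewrite <- sqrt_mult by (try apply pos_INR; apply Rle_0_sqr).
  replace (sqrt PI / 2) with (sqrt (PI / 4)).
  apply sqrt_le_1_alt. unfold Rsqr. lra.
  pose proof PI_RGT_0.
  replace (PI / 4) with (PI * (/ 2 * / 2)) by field. rewrite sqrt_mult by lra.
  rewrite sqrt_square by lra. field.
Qed.

Lemma sqrtIw_low k n : (k < n)%nat -> sqrt (PI / 12) <= sqrt (INR n) * Iw (2*k+2*n+3).
Proof.
  intros Hn. pose proof (Iw_prod (2*k+2*n+3)) as H. pose proof (Iw_mono (2*k+2*n+3)) as H2.
  pose proof (Iw_pos (2*k+2*n+3)). pose proof (Iw_pos (S (2*k+2*n+3))).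
  assert (Hn' : INR k + 1 <= INR n) by (rewrite <- S_INR; apply le_INR; lia).
  assert (Hp : INR (2*k+2*n+3+1) = 2 * INR k + 2 * INR n + 4) by (rewrite !plus_INR, !mult_INR; simpl; ring).
  rewrite Hp in H. pose proof (pos_INR k). pose proof PI_RGT_0.
  set (I := Iw (2*k+2*n+3)) in *. set (J := Iw (S (2*k+2*n+3))) in *.
  assert (HI : PI / 2 <= (2 * INR k + 2 * INR n + 4) * (I * I)).
  { assert (0 <= (2 * INR k + 2 * INR n + 4) * I) by (apply Rmult_le_pos; lra).
    assert (0 <= ((2 * INR k + 2 * INR n + 4) * I) * (I - J)) by (apply Rmult_le_pos; lra).
    rewrite <- H. nra. }
  assert (HI2 : PI / 12 <= INR n * (I * I)).
  { assert (0 <= I * I) by nra. assert ((2 * INR k + 2 * INR n + 4) <= 6 * INR n) by lra. nra. }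
  rewrite <- (sqrt_Rsqr I) by lra. rewrite <- sqrt_mult by (try apply pos_INR; apply Rle_0_sqr).
  apply sqrt_le_1_alt. unfold Rsqr. lra.
Qed.

Lemma gamma_bound k G : is_Gamma (INR k + 3/2) G -> 0 < G /\ G * w k 0 <= INR (fact k) * sqrt PI.
Proof.
  intros HG. rewrite J_Iw. pose proof (Iw_pos (2*k+1)) as HI. pose proof (fact_pos k) as Hf.
  pose proof PI_RGT_0 as Hpi.
  split.
  - set (m := INR (fact k) * (/ 2 ^ S k) * sqrt (PI / 12) / Iw (2*k+1)).
    assert (Hm : 0 < m).
    { unfold m. apply Rmult_lt_0_compat; [|apply Rinv_0_lt_compat; auto].
      apply Rmult_lt_0_compat. apply Rmult_lt_0_compat; auto. apply Rinv_0_lt_compat, pow_lt; lra.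
      apply sqrt_lt_R0; lra. }
    apply Rlt_le_trans with m; auto. apply (cv_ge _ _ m (S k) HG).
    intros n Hn. rewrite gauss_val by lia. unfold m.
    assert (A1 : / 2 ^ S k <= INR n ^ S k / q n k).
    { pose proof (q_le n k ltac:(lia)). pose proof (q_pos n k).
      assert (0 < INR n) by (apply lt_0_INR; lia).
      rewrite Rpow_mult_distr in H.
      apply (Rmult_le_reg_r (q n k)); auto. unfold Rdiv. rewrite Rmult_assoc, Rinv_l by lra.
      apply (Rmult_le_reg_l (2 ^ S k)). apply pow_lt; lra.
      rewrite <- Rmult_assoc, Rinv_r, Rmult_1_l, Rmult_1_r. lra. apply pow_nonzero; lra. }
    assert (A2 := sqrtIw_low k n ltac:(lia)).
    unfold Rdiv. apply Rmult_le_compat_r. left; apply Rinv_0_lt_compat; auto.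
    apply Rmult_le_compat. apply Rmult_le_pos. lra. left; apply Rinv_0_lt_compat, pow_lt; lra.
    apply sqrt_pos. apply Rmult_le_compat_l. lra. exact A1. exact A2.
  - replace (G * (2 * Iw (2 * k + 1))) with (G * (2 * Iw (2 * k + 1))) by ring.
    apply (Rmult_le_reg_r (/ (2 * Iw (2*k+1)))). apply Rinv_0_lt_compat; lra.
    rewrite Rmult_assoc, Rinv_r, Rmult_1_r by lra.
    apply (cv_le _ _ _ 1 HG). intros n Hn. rewrite gauss_val by lia.
    pose proof (q_ge n k). pose proof (q_pos n k). pose proof (sqrtIw_up k n ltac:(lia)).
    assert (Hq : INR n ^ S k / q n k <= 1).
    { apply (Rmult_le_reg_r (q n k)); auto. unfold Rdiv. rewrite Rmult_assoc, Rinv_l; lra. }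
    assert (Hq0 : 0 <= INR n ^ S k / q n k).
    { apply Rmult_le_pos. apply pow_le, pos_INR. left; apply Rinv_0_lt_compat; auto. }
    assert (Hs0 : 0 <= sqrt (INR n) * Iw (2 * k + 2 * n + 3)).
    { apply Rmult_le_pos. apply sqrt_pos. left; apply Iw_pos. }
    unfold Rdiv. rewrite Rinv_mult.
    replace (INR (fact k) * sqrt PI * (/ 2 * / Iw (2 * k + 1))) with
      (INR (fact k) * 1 * (sqrt PI / 2) * / Iw (2*k+1)) by (field; lra).
    apply Rmult_le_compat_r. left; apply Rinv_0_lt_compat; auto.
    apply Rmult_le_compat; auto. apply Rmult_le_pos; lra. apply Rmult_le_compat_l; lra.
Qed.


Theorem lemma7 (c : R) (psi : R -> R) (mr mi : R) (k : nat)
  (hc : 0 < c)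
  (heig : prolate_eigen c psi mr mi)
  (hmu : mr <> 0 \/ mi <> 0)
  (G : R) (hG : is_Gamma (INR k + 3 / 2) G)
  (pr : Riemann_integrable (fun x => Pbar k x * psi x) (-1) 1) :
  Rabs (RiemannInt pr)
    <= (c / 2) ^ k * (sqrt PI / G) * / sqrt (mr ^ 2 + mi ^ 2).
Proof.
  rewrite <- (Int_eq _ _ _ pr).
  pose proof (main_bound c psi mr mi k hc heig) as HM.
  destruct (gamma_bound k G hG) as [HG0 HGJ].
  set (beta := Int (-1) 1 (fun x => Pbar k x * psi x)) in *.
  assert (Hm2 : 0 < mr ^ 2 + mi ^ 2).
  { destruct hmu as [H|H]; apply Rsqr_pos_lt in H; unfold Rsqr in H;
    pose proof (Rle_0_sqr mr); pose proof (Rle_0_sqr mi); unfold Rsqr in *; simpl; lra. }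
  set (Sm := sqrt (mr ^ 2 + mi ^ 2)).
  assert (HSm : 0 < Sm) by (apply sqrt_lt_R0; auto).
  assert (Heq : sqrt ((mr * beta) ^ 2 + (mi * beta) ^ 2) = Rabs beta * Sm).
  { replace ((mr * beta) ^ 2 + (mi * beta) ^ 2) with (Rsqr beta * (mr ^ 2 + mi ^ 2)) by (unfold Rsqr; ring).
    rewrite sqrt_mult. rewrite sqrt_Rsqr_abs. reflexivity. apply Rle_0_sqr. lra. }
  rewrite Heq in HM.
  pose proof (w_k0_pos k) as Hw. pose proof (fact_pos k) as Hf.
  pose proof (pow_lt 2 k ltac:(lra)) as H2k. pose proof (pow_lt c k hc) as Hck.
  assert (HB : c ^ k * w k 0 / (2 ^ k * INR (fact k)) <= (c / 2) ^ k * (sqrt PI / G)).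
  { unfold Rdiv. rewrite Rpow_mult_distr, pow_inv.
    rewrite Rinv_mult.
    replace (c ^ k * w k 0 * (/ 2 ^ k * / INR (fact k))) with ((c ^ k * / 2 ^ k) * (w k 0 * / INR (fact k))) by ring.
    apply Rmult_le_compat_l. apply Rmult_le_pos; [lra| left; apply Rinv_0_lt_compat; lra].
    apply (Rmult_le_reg_r (G * INR (fact k))). apply Rmult_lt_0_compat; lra.
    replace (w k 0 * / INR (fact k) * (G * INR (fact k))) with (G * w k 0) by (field; lra).
    replace (sqrt PI * / G * (G * INR (fact k))) with (INR (fact k) * sqrt PI) by (field; lra).
    exact HGJ. }
  apply (Rmult_le_reg_r Sm); auto.
  rewrite Rmult_assoc, Rinv_l, Rmult_1_r by lra. lra.
Qed.
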